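(* Suppose Assumption A holds with constant $d$, and let $r>0$. Then there exists $\epsilon_o\in(0,1)$ (depending only on $\mathfrak a$ and $\lambda$) such that for all $\epsilon\in(0,\epsilon_o)$, $$\sup_{\theta^\circ\in\Theta^r_{\mathfrak a}}\mathbb E_{\theta^\circ}\|\hat\theta^{m^*_\epsilon}-\theta^\circ\|^2\le(2+r/d^2)(1\vee r)\,\Phi^*_\epsilon .$$
   Context: Let $\ell^2$ be the space of square-summable real sequences with norm $\|\cdot\|$. Fix a bounded real sequence $\lambda=(\lambda_j)_{j\ge1}$ with $\lambda_j\ne0$ for all $j$ and a noise level $\epsilon\in(0,1)$. For a parameter $\theta^\circ$ the data $Y=(Y_j)_{j\ge1}$ satisfy $Y_j=\lambda_j\theta^\circ_j+\sqrt\epsilon\,\xi_j$ with $\xi_j$ i.i.d. $N(0,1)$; $\mathbb E_{\theta^\circ}$ denotes expectation under this law. Fix prior means $\eta=(\eta_j)_{j\ge1}$ and prior variances $\tau_j\in(0,\infty)$ (possibly depending on $\epsilon$). For $m\in\mathbb N$ the sieve prior is the law of $\vartheta^m$ with independent coordinates, $\vartheta^m_j\sim N(\eta_j,\tau_j)$ for $j\le m$ and $\vartheta^m_j=\eta_j$ a.s. for $j>m$, in the model $Y_j=\lambda_j\vartheta^m_j+\sqrt\epsilon\xi_j$. Put $\sigma_j:=(\lambda_j^2\epsilon^{-1}+\tau_j^{-1})^{-1}$ and $\theta^Y_j:=\sigma_j(\tau_j^{-1}\eta_j+\lambda_j\epsilon^{-1}Y_j)$. The Bayes estimator is $\hat\theta^m:=\mathbb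 E[\vartheta^m|Y]$, i.e. $\hat\theta^m_j=\theta^Y_j$ for $j\le m$, $\hat\theta^m_j=\eta_j$ for $j>m$. Let $\Lambda_j:=\lambda_j^{-2}$, $\Lambda_{(m)}:=\max_{1\le j\le m}\Lambda_j$, $\bar\Lambda_m:=m^{-1}\sum_{j=1}^m\Lambda_j$. Let $G_\epsilon:=\max\{1\le m\le\lfloor\epsilon^{-1}\rfloor:\epsilon\Lambda_{(m)}\le\Lambda_1\}$. Assumption A: there is a constant $d>0$ such that $\tau_j\ge d\,(\epsilon^{1/2}\Lambda_j^{1/2}\vee\epsilon\Lambda_j)$ for all $1\le j\le G_\epsilon$ and all $\epsilon\in(0,1)$. Let $\mathfrak a=(\mathfrak a_j)_{j\ge1}$ be strictly positive, non-increasing, with $\mathfrak a_1=1$ and $\mathfrak a_j\to0$. For $r>0$ the ellipsoid is $\Theta^r_{\mathfrak a}:=\{\theta:\sum_{j\ge1}(\theta_j-\eta_j)^2/\mathfrak a_j\le r\}$. Minimax quantities: $m^*_\epsilon:=\min\{m\ge1:\mathfrak a_m\vee\epsilon m\bar\Lambda_m\le\mathfrak a_k\vee\epsilon k\bar\Lambda_k\text{ for all }k\ge1\}$ and $\Phi^*_\epsilon:=\mathfrak a_{m^*_\epsilon}\vee\epsilon m^*_\epsilon\bar\Lambda_{m^*_\epsilon}$. *)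

(* Defs.v *)
(* classical reals. Sequences are nat -> R, indexed from 1
   (the value at index 0 is never used). *)
From Stdlib Require Import Reals Lra Lia.
Open Scope R_scope.

Definition Lambda (lam : nat -> R) (j : nat) : R := / (lam j ^ 2).

Fixpoint LamMax (lam : nat -> R) (m : nat) : R :=
  match m with
  | O => 0
  | S k => Rmax (LamMax lam k) (Lambda lam (S k))
  end.

Fixpoint sumLam (lam : nat -> R) (m : nat) : R :=
  match m with
  | O => 0
  | S k => sumLam lam k + Lambda lam (S k)
  end.

Definition LamBar (lam : nat -> R) (m : nat) : R := sumLam lam m / INR m.

Definition Phi (a lam : nat -> R) (eps : R) (m : nat) : R :=
  Rmax (a m) (eps * INR m * LamBar lam m).

Definition IsMstar (a lam : nat -> R) (eps : R) (m : nat) : Prop :=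
  (1 <= m)%nat /\
  (forall k, (1 <= k)%nat -> Phi a lam eps m <= Phi a lam eps k) /\
  (forall m', (1 <= m')%nat ->
     (forall k, (1 <= k)%nat -> Phi a lam eps m' <= Phi a lam eps k) ->
     (m <= m')%nat).

(* Phi*_eps = Phi(m*_eps) *)

Definition IsG (lam : nat -> R) (eps : R) (G : nat) : Prop :=
  (1 <= G)%nat /\ (Z.of_nat G <= Int_part (/ eps))%Z /\
  eps * LamMax lam G <= Lambda lam 1 /\
  (forall m, (1 <= m)%nat -> (Z.of_nat m <= Int_part (/ eps))%Z ->
     eps * LamMax lam m <= Lambda lam 1 -> (m <= G)%nat).

(* Assumption A with constant d; tau eps j is the prior variance tau_j
   (allowed to depend on eps). *)
Definition AssumptionA (lam : nat -> R) (tau : R -> nat -> R) (d : R) : Prop :=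
  0 < d /\
  forall eps, 0 < eps < 1 ->
  forall G, IsG lam eps G ->
  forall j, (1 <= j <= G)%nat ->
    tau eps j >= d * Rmax (sqrt eps * sqrt (Lambda lam j)) (eps * Lambda lam j).

Definition sigma (lam : nat -> R) (tau : R -> nat -> R) (eps : R) (j : nat) : R :=
  / (lam j ^ 2 / eps + / tau eps j).

(* theta^Y_j as a function of the observation Y_j = y *)
Definition thetaY (lam eta : nat -> R) (tau : R -> nat -> R) (eps : R)
  (j : nat) (y : R) : R :=
  sigma lam tau eps j * (/ tau eps j * eta j + lam j / eps * y).

(* j-th coordinate of the Bayes estimator hat theta^m, when the true
   parameter is theta0 and the j-th noise variable xi_j takes value x
   (so Y_j = lambda_j theta0_j + sqrt eps x). *)
Definition thetaHat (m : nat) (lam eta : nat -> R) (tau : R -> nat -> R)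
  (eps : R) (theta0 : nat -> R) (j : nat) (x : R) : R :=
  if (j <=? m)%nat then thetaY lam eta tau eps j (lam j * theta0 j + sqrt eps * x)
  else eta j.

Definition gauss (x : R) : R := exp (- (x ^ 2) / 2) / sqrt (2 * PI).

(* E[f(xi)] = v for xi ~ N(0,1), as the improper Riemann integral
   lim_n int_{-n}^{n} f(x) phi(x) dx *)
Definition GaussExpIs (f : R -> R) (v : R) : Prop :=
  exists pr : forall n : nat,
      Riemann_integrable (fun x => f x * gauss x) (- INR n) (INR n),
    Un_cv (fun n => RiemannInt (pr n)) v.

Definition InEllipsoid (a eta : nat -> R) (r : R) (theta : nat -> R) : Prop :=
  exists s, infinite_sum (fun k => (theta (S k) - eta (S k)) ^ 2 / a (S k)) s
            /\ s <= r.

(* E_{theta0} || hat theta^m - theta0 ||^2 = v, computed as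
   sum_{j>=1} E (hat theta^m_j - theta0_j)^2 (each coordinate depends only
   on xi_j); the series must converge to v. *)
Definition RiskIs (m : nat) (lam eta : nat -> R) (tau : R -> nat -> R)
  (eps : R) (theta0 : nat -> R) (v : R) : Prop :=
  exists E : nat -> R,
    (forall j, (1 <= j)%nat ->
       GaussExpIs (fun x => (thetaHat m lam eta tau eps theta0 j x - theta0 j) ^ 2) (E j))
    /\ infinite_sum (fun k => E (S k)) v.

(* Main.v *)
From Coquelicot Require Import Coquelicot.
From Stdlib Require Import Reals Lra Lia ZArith.
Require Import Defs.
From Stdlib Require Import Reals.
Open Scope R_scope.


Ltac req := match goal with |- ?a = ?b => change (@eq R a b) end.

Definition phi (s:R) := exp (-(s*s)/2).
Definition U (x t : R) := exp (-(x*x*(1+t*t))/2) / (1+t*t).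
Definition F (x:R) := RInt phi 0 x.
Definition H (x:R) := 2 * RInt (U x) 0 1 + F x * F x.

Lemma phi_cont x : continuous phi x.
Proof. apply (ex_derive_continuous (V:=R_NormedModule)). unfold phi. auto_derive. auto. Qed.

Lemma phi_ex a b : ex_RInt phi a b.
Proof. apply (ex_RInt_continuous (V:=R_CompleteNormedModule)); intros; apply phi_cont. Qed.

Lemma pos1 t : 0 < 1 + t*t.
Proof. nra. Qed.

Lemma dU x t : is_derive (fun z => U z t) x (- x * phi x * phi (t*x)).
Proof.
  unfold U, phi. auto_derive. { generalize (pos1 t); lra. }
  rewrite (Rmult_assoc (-x)), <- exp_plus.
  replace (-(x*x)/2 + -(t*x*(t*x))/2) with (-(x*x*(1+t*t))*/2) by (unfold Rdiv; ring).
  field. generalize (pos1 t); lra.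
Qed.

Lemma exp_le_exp x y : x <= y -> exp x <= exp y.
Proof. intros [H|H]. left; apply exp_increasing; auto. subst; lra. Qed.

Lemma phi_cpt x : continuity_pt phi x.
Proof. apply continuity_pt_filterlim. apply phi_cont. Qed.

Lemma cont2 x t : continuity_2d_pt (fun u v => - u * phi u * phi (v*u)) x t.
Proof.
  apply continuity_2d_pt_mult.
  apply continuity_2d_pt_mult.
  apply continuity_2d_pt_opp, continuity_2d_pt_id1.
  apply (continuity_1d_2d_pt_comp phi (fun u v => u)). apply phi_cpt. apply continuity_2d_pt_id1.
  apply (continuity_1d_2d_pt_comp phi (fun u v => v*u)). apply phi_cpt.
  apply continuity_2d_pt_mult. apply continuity_2d_pt_id2. apply continuity_2d_pt_id1.
Qed.

Lemma U_ex x a b : ex_RInt (U x) a b.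
Proof.
  apply (ex_RInt_continuous (V:=R_CompleteNormedModule)); intros.
  apply (ex_derive_continuous (V:=R_NormedModule)). unfold U. auto_derive. generalize (pos1 z); lra.
Qed.

Lemma dIU x : is_derive (fun z => RInt (U z) 0 1) x (- phi x * F x).
Proof.
  assert (E: RInt (fun t => Derive (fun u => U u t) x) 0 1 = - phi x * F x).
  { rewrite (RInt_ext _ (fun t => scal (- phi x) (scal x (phi (x*t+0))))).
    2:{ intros t _. rewrite (is_derive_unique (fun u : R => U u t) x _ (dU x t)).
        unfold scal; simpl; unfold mult; simpl. rewrite Rplus_0_r.
        rewrite (Rmult_comm t x). ring. }
    rewrite (RInt_scal (V:=R_CompleteNormedModule)). 
    transitivity (scal (- phi x) (RInt phi (x*0+0) (x*1+0))).
    f_equal. exact (RInt_comp_lin phi x 0 0 1 (phi_ex _ _)).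
    unfold F, scal; simpl; unfold mult; simpl. f_equal; f_equal; ring.
    apply (ex_RInt_ext (fun t => scal x (phi (x*t+0)))).
    { intros; reflexivity. }
    apply (ex_RInt_comp_lin phi). apply phi_ex. }
  rewrite <- E.
  apply (is_derive_RInt_param (fun z t => U z t)).
  - exists (mkposreal 1 Rlt_0_1). intros y _ t _. eexists. apply dU.
  - intros t _. apply (continuity_2d_pt_ext (fun u v => - u * phi u * phi (v*u))).
    intros; symmetry; apply is_derive_unique, dU. apply cont2.
  - exists (mkposreal 1 Rlt_0_1). intros y _. apply U_ex.
Qed.

Lemma dF x : is_derive F x (phi x).
Proof.
  apply (is_derive_RInt (V:=R_CompleteNormedModule) phi F 0 x).
  - exists (mkposreal 1 Rlt_0_1). intros y _. apply RInt_correct, phi_ex.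
  - apply phi_cont.
Qed.

Lemma dH x : is_derive H x 0.
Proof.
  replace 0 with (plus (2 * (- phi x * F x)) (plus (mult (phi x) (F x)) (mult (F x) (phi x)))).
  2:{ unfold plus, mult; simpl; unfold plus, mult; simpl. ring. }
  apply (is_derive_plus (K:=R_AbsRing) (V:=R_NormedModule) (fun z => 2 * RInt (U z) 0 1) (fun z => F z * F z)).
  apply is_derive_scal. apply dIU.
  apply (is_derive_mult (K:=R_AbsRing) F F); try apply dF.
  intros; apply Rmult_comm.
Qed.

Lemma H_const x : H x = H 0.
Proof.
  destruct (MVT_gen H 0 x (fun _ => 0)) as [c [_ Hc]].
  - intros; apply dH.
  - intros; apply continuity_pt_filterlim. apply (ex_derive_continuous (V:=R_NormedModule)). eexists; apply dH.
  - lra.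
Qed.

Lemma H0 : H 0 = PI / 2.
Proof.
  unfold H, F. rewrite RInt_point. unfold zero; simpl.
  rewrite (RInt_ext (U 0) (fun t => / (1 + t^2))).
  2:{ intros t _. unfold U. rewrite !Rmult_0_l, Ropp_0. unfold Rdiv. rewrite Rmult_0_l, exp_0.
      simpl. rewrite Rmult_1_r. ring. }
  assert (K : is_RInt (fun t => / (1 + t^2)) 0 1 (minus (atan 1) (atan 0))).
  { apply (is_RInt_derive (V:=R_CompleteNormedModule) atan). intros; apply is_derive_Reals, derivable_pt_lim_atan.
    intros. apply (ex_derive_continuous (V:=R_NormedModule)). auto_derive. generalize (pos1 x); nra. }
  rewrite (is_RInt_unique _ _ _ _ K). rewrite atan_1, atan_0. unfold minus, plus, opp; simpl.
  unfold plus, opp; simpl. field.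
Qed.

Lemma IU_bounds x : 0 <= RInt (U x) 0 1 <= phi x.
Proof.
  split.
  - apply RInt_ge_0. lra. apply U_ex. intros t _. unfold U. apply Rle_mult_inv_pos.
    apply Rlt_le, exp_pos. apply pos1.
  - replace (phi x) with (RInt (fun _ => phi x) 0 1).
    2:{ rewrite RInt_const. unfold scal; simpl; unfold mult; simpl. ring. }
    apply RInt_le. lra. apply U_ex. apply (ex_RInt_const (V:=R_CompleteNormedModule)).
    intros t Ht. unfold U, phi.
    replace (-(x*x*(1+t*t))/2) with (-(x*x)/2 + (-(t*x*(t*x)))/2) by field.
    rewrite exp_plus. unfold Rdiv.
    assert (0 < exp (- (x*x)/2)) by apply exp_pos.
    assert (exp (- (t*x*(t*x)) * /2) <= 1).
    { rewrite <- exp_0. apply exp_le_exp. assert (0 <= t*x*(t*x)) by nra. lra. }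
    assert (1 <= 1 + t*t) by nra.
    assert (0 < /(1+t*t) <= 1). { split. apply Rinv_0_lt_compat; lra. rewrite <- Rinv_1. apply Rinv_le_contravar; lra. }
    assert (0 <= exp (- (t*x*(t*x)) * /2)) by (apply Rlt_le, exp_pos).
    unfold Rdiv in *. 
    assert (exp (- (t * x * (t * x)) * / 2) * / (1 + t * t) <= 1) by nra.
    nra.
Qed.

Lemma lim_inv1 : is_lim_seq (fun n => 2 * / (INR n + 1)) 0.
Proof.
  replace 0 with (2 * 0) by ring.
  apply (is_lim_seq_scal_l (fun n => / (INR n + 1)) 2 0).
  assert (K := is_lim_seq_INR).
  apply (is_lim_seq_incr_1 INR p_infty) in K.
  apply is_lim_seq_inv in K. 2: discriminate.
  apply (is_lim_seq_ext (fun n => / INR (S n))). intros n. rewrite S_INR. reflexivity. exact K.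
Qed.

Lemma phi_le x : 0 <= x -> phi x <= 2 * / (x + 1).
Proof.
  intros Hx. unfold phi.
  assert (E : exp (-(x*x)/2) = / exp ((x*x)/2)).
  { rewrite <- exp_Ropp. f_equal. field. }
  rewrite E. assert (K := exp_ineq1_le ((x*x)/2)).
  assert (0 < exp ((x*x)/2)) by apply exp_pos.
  replace (2 * / (x+1)) with (/ ((x+1)/2)) by (field; lra).
  apply Rinv_le_contravar. lra. nra.
Qed.

Lemma F_ge0 x : 0 <= x -> 0 <= F x.
Proof.
  intros Hx. apply RInt_ge_0; auto. apply phi_ex. intros. unfold phi. apply Rlt_le, exp_pos.
Qed.

Lemma F_lim : is_lim_seq (fun n => F (INR n)) (sqrt (PI/2)).
Proof.
  assert (IU0 : is_lim_seq (fun n => RInt (U (INR n)) 0 1) 0).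
  { apply (is_lim_seq_le_le (fun _ => 0) _ (fun n => 2 * / (INR n + 1))).
    intros n. destruct (IU_bounds (INR n)). split; auto.
    eapply Rle_trans; eauto. apply phi_le, pos_INR.
    apply is_lim_seq_const. apply lim_inv1. }
  assert (Sq : is_lim_seq (fun n => F (INR n) * F (INR n)) (PI/2)).
  { eapply is_lim_seq_ext.
    { intros n. assert (K := H_const (INR n)). rewrite H0 in K. unfold H in K.
      instantiate (1 := fun n => PI/2 - 2 * RInt (U (INR n)) 0 1). simpl. lra. }
    assert (L : is_lim_seq (fun n => PI/2 - 2 * RInt (U (INR n)) 0 1) (PI/2 - 2 * 0)).
    { apply (is_lim_seq_minus' (fun _ => PI/2)). apply is_lim_seq_const.
      apply (is_lim_seq_scal_l _ 2 0). exact IU0. }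
    replace (PI/2 - 2*0) with (PI/2) in L by ring. exact L. }
  eapply is_lim_seq_ext.
  { intros n. apply sqrt_square. apply F_ge0, pos_INR. }
  apply (is_lim_seq_continuous sqrt). apply continuity_pt_sqrt.
  generalize PI_RGT_0; lra. exact Sq.
Qed.

Lemma sym_int X : RInt phi (-X) X = 2 * F X.
Proof.
  assert (A : RInt phi 0 (-X) = - F X).
  { transitivity (RInt phi (-1*0+0) (-1*X+0)). f_equal; ring.
    rewrite <- (RInt_comp_lin (V:=R_CompleteNormedModule) phi (-1) 0 0 X).
    2: apply phi_ex.
    rewrite (RInt_ext _ (fun y => opp (phi y))).
    rewrite (RInt_opp (V:=R_CompleteNormedModule)). reflexivity. apply phi_ex.
    intros y _. unfold scal, opp, phi; simpl; unfold mult, opp; simpl. replace ((-1 * y + 0) * (-1 * y + 0)) with (y*y) by ring. ring. }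
  rewrite <- (RInt_Chasles (V:=R_CompleteNormedModule) phi (-X) 0 X) by apply phi_ex.
  rewrite <- (opp_RInt_swap (V:=R_CompleteNormedModule) phi 0 (-X)) by apply phi_ex.
  rewrite A. unfold F, plus, opp; simpl; unfold plus, opp; simpl. ring.
Qed.

Lemma I0_lim : is_lim_seq (fun n => RInt phi (- INR n) (INR n)) (sqrt (2*PI)).
Proof.
  eapply is_lim_seq_ext. { intros n. symmetry. apply sym_int. }
  replace (sqrt (2*PI)) with (2 * sqrt (PI/2)).
  apply (is_lim_seq_scal_l _ 2 (sqrt (PI/2))). apply F_lim.
  replace (2*PI) with (2*2 * (PI/2)) by field.
  generalize PI_RGT_0; intro.
  rewrite sqrt_mult, sqrt_square; try reflexivity; try lra.
Qed.

Definition I0 (X : R) := RInt phi (-X) X.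

Lemma phi_even y : phi (-y) = phi y.
Proof. unfold phi. replace (-y * -y) with (y*y) by ring. reflexivity. Qed.

Lemma M0 X : is_RInt phi (-X) X (I0 X).
Proof. apply (RInt_correct (V:=R_CompleteNormedModule)), phi_ex. Qed.

Lemma M1 X : is_RInt (fun x => x * phi x) (-X) X 0.
Proof.
  assert (K : is_RInt (fun x => x * phi x) (-X) X (minus (- phi X) (- phi (-X)))).
  { apply (is_RInt_derive (V:=R_CompleteNormedModule) (fun x => - phi x)).
    - intros x _. unfold phi. auto_derive. auto. req. unfold Rdiv. field.
    - intros x _. apply (ex_derive_continuous (V:=R_NormedModule)). unfold phi. auto_derive. auto. }
  rewrite phi_even in K. unfold minus, plus, opp in K; simpl in K; unfold plus, opp in K; simpl in K.
  replace 0 with (- phi X + - - phi X) by ring. exact K.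
Qed.

Lemma M2 X : is_RInt (fun x => x * x * phi x) (-X) X (I0 X - 2 * X * phi X).
Proof.
  assert (K : is_RInt (fun x => x * x * phi x - phi x) (-X) X (minus (- X * phi X) (- (-X) * phi (-X)))).
  { apply (is_RInt_derive (V:=R_CompleteNormedModule) (fun x => - x * phi x)).
    - intros x _. unfold phi. auto_derive. auto. req. unfold Rdiv. field.
    - intros x _. apply (ex_derive_continuous (V:=R_NormedModule)). unfold phi. auto_derive. auto. }
  rewrite phi_even in K.
  assert (K2 := is_RInt_plus (V:=R_NormedModule) _ _ _ _ _ _ K (M0 X)).
  replace (I0 X - 2 * X * phi X) with (plus (minus (- X * phi X) (- - X * phi X)) (I0 X)).
  eapply is_RInt_ext. 2: exact K2.
  { intros x _. unfold plus; simpl. ring. }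
  unfold minus, plus, opp; simpl; unfold plus, opp; simpl. ring.
Qed.

Lemma xphi_le x : 0 <= x -> x * phi x <= 4 * / (x + 1).
Proof.
  intros Hx. unfold phi.
  assert (E : exp (-(x*x)/2) = / exp ((x*x)/2)).
  { rewrite <- exp_Ropp. f_equal. field. }
  rewrite E. assert (K := exp_ineq1_le ((x*x)/2)).
  assert (0 < exp ((x*x)/2)) by apply exp_pos.
  apply (Rmult_le_reg_r (exp ((x*x)/2) * (x+1))). nra.
  replace (x * / exp (x * x / 2) * (exp (x * x / 2) * (x + 1))) with (x * (x+1)) by (field; lra).
  replace (4 * / (x + 1) * (exp (x * x / 2) * (x + 1))) with (4 * exp (x*x/2)) by (field; lra).
  nra.
Qed.

Lemma nphi_lim : is_lim_seq (fun n => INR n * phi (INR n)) 0.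
Proof.
  apply (is_lim_seq_le_le (fun _ => 0) _ (fun n => 2 * (2 * / (INR n + 1)))).
  intros n. split. apply Rmult_le_pos. apply pos_INR. unfold phi; apply Rlt_le, exp_pos.
  replace (2 * (2 * / (INR n + 1))) with (4 * / (INR n + 1)) by ring. apply xphi_le, pos_INR.
  apply is_lim_seq_const.
  replace (Finite 0) with (Rbar_mult 2 0) by (simpl; f_equal; ring).
  apply is_lim_seq_scal_l. apply lim_inv1.
Qed.

Lemma gauss_phi x : gauss x = phi x / sqrt (2*PI).
Proof. unfold gauss, phi. replace (x^2) with (x*x) by ring. reflexivity. Qed.

Lemma lim_scal u a (l:R) : is_lim_seq u l -> is_lim_seq (fun n => a * u n) (a*l).
Proof. intros H. apply (is_lim_seq_scal_l u a l) in H. exact H. Qed.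
Lemma lim_plus u v (l m:R) : is_lim_seq u l -> is_lim_seq v m -> is_lim_seq (fun n => u n + v n) (l+m).
Proof. intros H1 H2. apply (is_lim_seq_plus' u v l m); auto. Qed.
Lemma lim_minus u v (l m:R) : is_lim_seq u l -> is_lim_seq v m -> is_lim_seq (fun n => u n - v n) (l-m).
Proof. intros H1 H2. apply (is_lim_seq_minus' u v l m); auto. Qed.
Lemma lim_divc u (l k:R) : is_lim_seq u l -> is_lim_seq (fun n => u n / k) (l/k).
Proof. intros H. unfold Rdiv. eapply is_lim_seq_ext. intros n; apply Rmult_comm.
  rewrite Rmult_comm. apply lim_scal, H. Qed.

Lemma GE_quad f c s : (forall x, f x = (c + s*x)^2) -> GaussExpIs f (c^2+s^2).
Proof.
  intros Hf.
  set (K := sqrt (2*PI)).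
  assert (HK : 0 < K). { apply sqrt_lt_R0. generalize PI_RGT_0; lra. }
  set (V := fun X => (c^2 * I0 X + 2*c*s*0 + s^2 * (I0 X - 2*X*phi X)) / K).
  assert (isV : forall X, is_RInt (fun x => f x * gauss x) (-X) X (V X)).
  { intros X.
    assert (A := is_RInt_plus (V:=R_NormedModule) _ _ _ _ _ _
       (is_RInt_plus (V:=R_NormedModule) _ _ _ _ _ _
          (is_RInt_scal (V:=R_NormedModule) _ _ _ (c^2) _ (M0 X))
          (is_RInt_scal (V:=R_NormedModule) _ _ _ (2*c*s) _ (M1 X)))
       (is_RInt_scal (V:=R_NormedModule) _ _ _ (s^2) _ (M2 X))).
    assert (B := is_RInt_scal (V:=R_NormedModule) _ _ _ (/K) _ A).
    unfold V. 
    replace ((c ^ 2 * I0 X + 2 * c * s * 0 + s ^ 2 * (I0 X - 2 * X * phi X)) / K) with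
      (scal (/ K) (plus (plus (scal (c ^ 2) (I0 X)) (scal (2 * c * s) 0)) (scal (s ^ 2) (I0 X - 2 * X * phi X)))).
    2:{ unfold scal, plus; simpl; unfold mult, plus; simpl. unfold Rdiv. ring. }
    eapply is_RInt_ext. 2: exact B.
    intros x _. rewrite Hf, gauss_phi. unfold scal, plus; simpl; unfold mult, plus; simpl.
    req. fold K. field. lra. }
  exists (fun n => ex_RInt_Reals_0 _ _ _ (ex_intro _ _ (isV (INR n)))).
  apply is_lim_seq_Reals.
  eapply is_lim_seq_ext.
  { intros n. match goal with |- _ = RiemannInt ?p => rewrite <- (RInt_Reals _ _ _ p) end.
    symmetry. apply is_RInt_unique. apply isV. }
  unfold V.
  assert (L : is_lim_seq (fun n => (c ^ 2 * I0 (INR n) + 2 * c * s * 0 + s ^ 2 * (I0 (INR n) - 2 * INR n * phi (INR n))) / K)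
     ((c^2 * K + 2*c*s*0 + s^2 * (K - 2 * 0)) / K)).
  { apply lim_divc.
    apply lim_plus. apply lim_plus.
    apply lim_scal. apply I0_lim.
    apply is_lim_seq_const.
    apply lim_scal. apply lim_minus. apply I0_lim.
    eapply is_lim_seq_ext. { intros n. symmetry. apply Rmult_assoc. }
    apply lim_scal. apply nphi_lim. }
  replace (c^2 + s^2) with ((c^2 * K + 2*c*s*0 + s^2 * (K - 2 * 0)) / K) by (field; lra).
  exact L.
Qed.


Lemma coord_in lam eta tau eps theta0 m j :
  0 < eps -> 0 < tau eps j -> lam j <> 0 -> (j <= m)%nat ->
  GaussExpIs (fun x => (thetaHat m lam eta tau eps theta0 j x - theta0 j) ^ 2)
   ((Defs.sigma lam tau eps j / tau eps j * (eta j - theta0 j))^2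
     + (Defs.sigma lam tau eps j * lam j * sqrt eps / eps)^2).
Proof.
  intros He Ht Hl Hjm. apply GE_quad. intros x.
  unfold thetaHat. replace (j <=? m)%nat with true by (symmetry; apply Nat.leb_le; auto).
  unfold thetaY, Defs.sigma.
  assert (0 < lam j ^ 2) by (simpl; rewrite Rmult_1_r; apply Rsqr_pos_lt; auto).
  assert (0 < lam j ^ 2 / eps + / tau eps j).
  { apply Rplus_lt_0_compat. apply Rdiv_lt_0_compat; auto. apply Rinv_0_lt_compat; auto. }
  f_equal. field. repeat split; try lra. assert (0 < lam j ^ 2 * tau eps j) by (apply Rmult_lt_0_compat; auto). lra.
Qed.

Lemma coord_out lam eta tau eps theta0 m j :
  (m < j)%nat ->
  GaussExpIs (fun x => (thetaHat m lam eta tau eps theta0 j x - theta0 j) ^ 2)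
   ((eta j - theta0 j)^2 + 0^2).
Proof.
  intros Hjm. apply (GE_quad _ (eta j - theta0 j) 0). intros x.
  unfold thetaHat. replace (j <=? m)%nat with false by (symmetry; apply Nat.leb_gt; auto).
  f_equal. ring.
Qed.

Lemma sigma_eq l t e : 0 < e -> 0 < t -> l <> 0 ->
  / (l ^ 2 / e + / t) = e * t / (l^2 * t + e).
Proof.
  intros He Ht Hl. assert (0 < l^2) by (simpl; rewrite Rmult_1_r; apply Rsqr_pos_lt; auto).
  assert (0 < l^2 * t) by (apply Rmult_lt_0_compat; auto).
  field. repeat split; lra.
Qed.

Lemma var_bound l t e : 0 < e -> 0 < t -> l <> 0 ->
  (/ (l ^ 2 / e + / t) * l * sqrt e / e) ^ 2 <= e * / (l ^ 2).
Proof.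
  intros He Ht Hl. rewrite sigma_eq by auto.
  assert (0 < l^2) by (simpl; rewrite Rmult_1_r; apply Rsqr_pos_lt; auto).
  assert (0 < l^2 * t) by (apply Rmult_lt_0_compat; auto).
  remember (l^2) as L.
  replace ((e * t / (L * t + e) * l * sqrt e / e) ^ 2) with (e * (t^2 * L) / (L*t+e)^2).
  2:{ replace ((e * t / (L * t + e) * l * sqrt e / e) ^ 2) with
        ((e * t / (L * t + e) * l / e)^2 * (sqrt e * sqrt e)) by (field; lra).
      rewrite sqrt_sqrt by lra. subst L. field. split; lra. }
  apply (Rmult_le_reg_r ((L*t+e)^2 * L)). apply Rmult_lt_0_compat; auto. apply pow_lt; lra.
  replace (e * (t ^ 2 * L) / (L * t + e) ^ 2 * ((L * t + e) ^ 2 * L)) with (e * ((L*t)*(L*t))) by (field; lra).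
  replace (e * / L * ((L * t + e) ^ 2 * L)) with (e * ((L*t+e)*(L*t+e))) by (field; lra).
  apply Rmult_le_compat_l. lra. nra.
Qed.

Lemma bias_bound l t e d D : 0 < e -> 0 < t -> l <> 0 -> 0 < d ->
  t >= d * (sqrt e * sqrt (/ l^2)) ->
  (/ (l ^ 2 / e + / t) / t * D) ^ 2 <= e * / (l ^ 2) * D^2 / d^2.
Proof.
  intros He Ht Hl Hd Htd. rewrite sigma_eq by auto.
  assert (0 < l^2) by (simpl; rewrite Rmult_1_r; apply Rsqr_pos_lt; auto).
  assert (0 < l^2 * t) by (apply Rmult_lt_0_compat; auto).
  remember (l^2) as L.
  assert (Ht2 : t^2 >= d^2 * (e / L)).
  { assert (0 <= d * (sqrt e * sqrt (/ L))).
    { apply Rmult_le_pos. lra. apply Rmult_le_pos; apply sqrt_pos. }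
    replace (d^2 * (e/L)) with ((d * (sqrt e * sqrt (/ L)))^2).
    2:{ replace ((d * (sqrt e * sqrt (/ L)))^2) with (d^2 * ((sqrt e * sqrt e) * (sqrt (/L) * sqrt (/L)))) by ring.
        rewrite !sqrt_sqrt. unfold Rdiv; ring. left; apply Rinv_0_lt_compat; lra. lra. }
    nra. }
  replace ((e * t / (L * t + e) / t * D) ^ 2) with (e^2 * D^2 / (L*t+e)^2) by (field; lra).
  assert (0 < (L*t+e)^2) by (apply pow_lt; lra).
  assert (0 <= D^2) by (apply pow2_ge_0).
  assert (Hk : e * L * d^2 <= (L*t+e)^2).
  { assert (L * t^2 * L >= L * (d^2 * (e/L)) * L).
    { apply Rle_ge. apply Rmult_le_compat_r. lra. apply Rmult_le_compat_l. lra. lra. }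
    match goal with Hx : L * t^2 * L >= _ |- _ => 
      replace (L * (d^2 * (e/L)) * L) with (e * L * d^2) in Hx by (field; lra) end.
    assert (0 <= L*t) by lra. nra. }
  unfold Rdiv. 
  apply (Rmult_le_reg_r ((L*t+e)^2 * L * d^2)). assert (0 < d^2) by (apply pow_lt; lra). 
    apply Rmult_lt_0_compat; [apply Rmult_lt_0_compat|]; lra.
  replace (e ^ 2 * D ^ 2 * / (L * t + e) ^ 2 * ((L * t + e) ^ 2 * L * d ^ 2)) with (e * D^2 * (e * L * d^2)) by (field; lra).
  replace (e * / L * D ^ 2 * / d ^ 2 * ((L * t + e) ^ 2 * L * d ^ 2)) with (e * D^2 * (L*t+e)^2) by (field; split; lra).
  apply Rmult_le_compat_l. apply Rmult_le_pos; lra. lra.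
Qed.

Section LamFacts.
Variable lam : nat -> R.
Hypothesis Hnz : forall j, (1 <= j)%nat -> lam j <> 0.

Lemma Lambda_pos j : (1 <= j)%nat -> 0 < Lambda lam j.
Proof.
  intros. unfold Lambda. apply Rinv_0_lt_compat. simpl. rewrite Rmult_1_r.
  apply Rsqr_pos_lt. auto.
Qed.

Lemma sumLam_ge0 m : 0 <= sumLam lam m.
Proof. induction m; simpl. lra. assert (0 < Lambda lam (S m)) by (apply Lambda_pos; lia). lra. Qed.

Lemma LamMax_le_sum m : LamMax lam m <= sumLam lam m.
Proof.
  induction m; simpl. lra. assert (0 < Lambda lam (S m)) by (apply Lambda_pos; lia).
  assert (0 <= sumLam lam m) by apply sumLam_ge0.
  apply Rmax_lub; lra.
Qed.

Lemma Lambda_le_max m j : (1 <= j <= m)%nat -> Lambda lam j <= LamMax lam m.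
Proof.
  induction m; intros Hj. lia. simpl.
  destruct (Nat.eq_dec j (S m)). subst. apply Rmax_r.
  eapply Rle_trans. apply IHm. lia. apply Rmax_l.
Qed.

Lemma sumLam_lower B m : 0 < B -> (forall j, (1 <= j)%nat -> Rabs (lam j) <= B) ->
  INR m / B^2 <= sumLam lam m.
Proof.
  intros HB Hb. induction m. simpl. unfold Rdiv; lra.
  rewrite S_INR. simpl sumLam.
  assert (/ B^2 <= Lambda lam (S m)).
  { unfold Lambda. apply Rinv_le_contravar.
    simpl. rewrite Rmult_1_r. apply Rsqr_pos_lt. apply Hnz; lia.
    assert (K := Hb (S m) ltac:(lia)). 
    rewrite <- pow2_abs. apply pow_incr. split; auto. apply Rabs_pos. }
  unfold Rdiv in *. lra.
Qed.

Lemma INR_LamBar m : (1 <= m)%nat -> INR m * LamBar lam m = sumLam lam m.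
Proof. intros. unfold LamBar. field. apply not_0_INR. lia. Qed.

End LamFacts.

Lemma Int_part_ge (z : Z) x : IZR z <= x -> (z <= Int_part x)%Z.
Proof.
  intros H. destruct (base_Int_part x) as [H1 H2].
  destruct (Z_le_gt_dec z (Int_part x)) as [|Hgt]; auto.
  assert (IZR (Int_part x + 1) <= IZR z) by (apply IZR_le; lia).
  match goal with Hq : IZR (_ + 1) <= _ |- _ => rewrite plus_IZR in Hq end. lra.
Qed.

Lemma find_max (P : nat -> Prop) (Pdec : forall n, {P n} + {~ P n}) N :
  P 1%nat -> (1 <= N)%nat ->
  exists G, (1 <= G <= N)%nat /\ P G /\ forall m, (1 <= m <= N)%nat -> P m -> (m <= G)%nat.
Proof.
  intros P1. induction N; intros HN. lia.
  destruct (Nat.eq_dec N 0). subst. exists 1%nat. split. lia. split; auto. intros; lia.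
  destruct IHN as [G [HG1 [HG2 HG3]]]. lia.
  destruct (Pdec (S N)).
  - exists (S N). split. lia. split; auto. intros; lia.
  - exists G. split. lia. split; auto. intros m Hm Pm.
    destruct (Nat.eq_dec m (S N)). subst; contradiction. apply HG3; auto. lia.
Qed.

Lemma G_exists lam eps : 0 < eps < 1 -> 0 < Lambda lam 1 -> exists G, IsG lam eps G.
Proof.
  intros He HL.
  assert (Hi : (1 <= Int_part (/ eps))%Z).
  { apply Int_part_ge. apply (Rmult_le_reg_l eps). lra. rewrite Rinv_r by lra. lra. }
  set (N := Z.to_nat (Int_part (/eps))).
  destruct (find_max (fun m => eps * LamMax lam m <= Lambda lam 1)
     (fun n => Rle_dec _ _) N) as [G [HG1 [HG2 HG3]]].
  - simpl. rewrite Rmax_right by lra. nra.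
  - unfold N. lia.
  - exists G. unfold IsG. split. lia. split. unfold N in HG1. lia. split. auto.
    intros m Hm1 Hm2 Hm3. apply HG3; auto. unfold N. lia.
Qed.

Lemma series_fin (u : nat -> R) N : (forall k, (N < k)%nat -> u k = 0) -> is_series u (sum_n u N).
Proof.
  intros Hu. unfold is_series.
  apply (filterlim_ext_loc (fun _ => sum_n u N)).
  - exists N. intros n Hn. induction n.
    + assert (N = 0)%nat by lia. subst. reflexivity.
    + destruct (Nat.eq_dec (S n) N). subst. reflexivity.
      rewrite sum_Sn. rewrite <- IHn by lia. rewrite Hu by lia.
      unfold plus, zero; simpl; unfold plus; simpl. symmetry; apply Rplus_0_r.
  - apply filterlim_const.
Qed.

Definition ind (lam : nat -> R) (eps : R) (m : nat) (k : nat) : R :=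
  if (S k <=? m)%nat then eps * Lambda lam (S k) else 0.

Lemma ind_sum lam eps m : (1 <= m)%nat -> is_series (ind lam eps m) (eps * sumLam lam m).
Proof.
  intros Hm.
  assert (E : forall n, (n < m)%nat -> sum_n (ind lam eps m) n = eps * sumLam lam (S n)).
  { induction n; intros Hn.
    - rewrite sum_O. unfold ind. replace (1 <=? m)%nat with true by (symmetry; apply Nat.leb_le; lia).
      simpl. req. ring.
    - rewrite sum_Sn, IHn by lia. unfold ind. replace (S (S n) <=? m)%nat with true by (symmetry; apply Nat.leb_le; lia).
      unfold plus; simpl; unfold plus; simpl. change (sumLam lam (S (S n))) with (sumLam lam (S n) + Lambda lam (S (S n))). req. ring. }
  replace (eps * sumLam lam m) with (sum_n (ind lam eps m) (pred m)).
  apply series_fin. intros k Hk. unfold ind. replace (S k <=? m)%nat with false by (symmetry; apply Nat.leb_gt; lia). reflexivity.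
  rewrite E by lia. f_equal. f_equal. lia.
Qed.

Lemma a_mono (a : nat -> R) : (forall j, (1 <= j)%nat -> a (S j) <= a j) ->
  forall i j, (1 <= i <= j)%nat -> a j <= a i.
Proof.
  intros Ha i j Hij. induction j. lia.
  destruct (Nat.eq_dec i (S j)). subst; lra.
  eapply Rle_trans. apply Ha. lia. apply IHj. lia.
Qed.

Theorem mainTheorem9 :
  forall (lam a : nat -> R),
    (exists B, forall j, (1 <= j)%nat -> Rabs (lam j) <= B) ->
    (forall j, (1 <= j)%nat -> lam j <> 0) ->
    (forall j, (1 <= j)%nat -> 0 < a j) ->
    (forall j, (1 <= j)%nat -> a (S j) <= a j) ->
    a 1%nat = 1 ->
    Un_cv a 0 ->
  exists eps_o, 0 < eps_o < 1 /\
  forall (d r : R) (eta : nat -> R) (tau : R -> nat -> R),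
    (forall eps j, 0 < eps < 1 -> (1 <= j)%nat -> 0 < tau eps j) ->
    AssumptionA lam tau d ->
    0 < r ->
  forall eps, 0 < eps < eps_o ->
  forall mstar, IsMstar a lam eps mstar ->
  forall theta0, InEllipsoid a eta r theta0 ->
  exists v, RiskIs mstar lam eta tau eps theta0 v /\
    v <= (2 + r / d ^ 2) * Rmax 1 r * Phi a lam eps mstar.
Proof.
  intros lam a [B HB] Hnz Hapos Hamono Ha1 Hacv.
  set (B' := Rmax B 1).
  assert (HB'pos : 0 < B') by (unfold B'; generalize (Rmax_r B 1); lra).
  assert (HB' : forall j, (1 <= j)%nat -> Rabs (lam j) <= B').
  { intros j Hj. eapply Rle_trans. apply HB; auto. apply Rmax_l. }
  assert (HL1 : 0 < Lambda lam 1) by (apply Lambda_pos; auto).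
  set (c := Rmin (Lambda lam 1) (/ B'^2)).
  assert (Hc : 0 < c).
  { unfold c. apply Rmin_glb_lt; auto. apply Rinv_0_lt_compat, pow_lt; lra. }
  destruct (Hacv c Hc) as [N HN].
  set (K := S N).
  assert (HaK : a K <= c).
  { assert (T := HN K ltac:(unfold K; lia)). unfold Rdist in T.
    rewrite Rminus_0_r in T. apply Rabs_def2 in T. lra. }
  assert (HsK : 0 <= sumLam lam K) by (apply sumLam_ge0; auto).
  set (eps_o := Rmin (1/2) (c / (sumLam lam K + 1))).
  assert (Heo : 0 < eps_o).
  { unfold eps_o. apply Rmin_glb_lt. lra. apply Rdiv_lt_0_compat; lra. }
  exists eps_o. split. split; auto. unfold eps_o. generalize (Rmin_l (1/2) (c / (sumLam lam K + 1))). lra.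
  intros d r eta tau Htau HA Hr eps Heps m Hms theta0 Hell.
  destruct HA as [Hd HA].
  destruct Hms as [Hm1 [Hmmin _]].
  assert (He1 : 0 < eps < 1).
  { split. lra. generalize (Rmin_l (1/2) (c / (sumLam lam K + 1))). fold eps_o. lra. }
  assert (HPK : Phi a lam eps K <= c).
  { unfold Phi. rewrite Rmult_assoc, INR_LamBar by (auto; unfold K; lia).
    apply Rmax_lub. auto.
    assert (Hx : eps <= c / (sumLam lam K + 1)).
    { generalize (Rmin_r (1/2) (c / (sumLam lam K + 1))). fold eps_o. lra. }
    apply (Rmult_le_compat_r (sumLam lam K)) in Hx; auto.
    eapply Rle_trans. exact Hx.
    apply (Rmult_le_reg_r (sumLam lam K + 1)). lra.
    replace (c / (sumLam lam K + 1) * sumLam lam K * (sumLam lam K + 1)) with (c * sumLam lam K) by (field; lra).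
    nra. }
  set (Ph := Phi a lam eps m).
  assert (HPm : Ph <= c) by (assert (T := Hmmin K ltac:(unfold K; lia)); unfold Ph; lra).
  assert (Hsm : eps * sumLam lam m <= Ph).
  { unfold Ph, Phi. rewrite Rmult_assoc, INR_LamBar by auto. apply Rmax_r. }
  assert (Ham : a m <= Ph) by (unfold Ph, Phi; apply Rmax_l).
  assert (Hamp : 0 < a m) by auto.
  assert (Hph0 : 0 <= Ph) by lra.
  assert (HLM : eps * LamMax lam m <= Ph).
  { eapply Rle_trans. 2: exact Hsm. apply Rmult_le_compat_l. lra. apply LamMax_le_sum; auto. }
  destruct (G_exists lam eps He1 HL1) as [G HG].
  assert (HmG : (m <= G)%nat).
  { destruct HG as [_ [_ [_ HGmax]]]. apply HGmax; auto.
    - apply Int_part_ge. rewrite <- INR_IZR_INZ.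
      assert (T := sumLam_lower lam Hnz B' m HB'pos HB').
      assert (eps * (INR m / B'^2) <= c) by (eapply Rle_trans; [apply Rmult_le_compat_l; [lra|exact T]|lra]).
      assert (c <= / B'^2) by (unfold c; apply Rmin_r).
      assert (0 < B'^2) by (apply pow_lt; lra).
      apply (Rmult_le_reg_l eps). lra. rewrite Rinv_r by lra.
      unfold Rdiv in *. 
      assert (eps * INR m * / B' ^ 2 <= / B'^2) by lra.
      apply (Rmult_le_reg_r (/ B'^2)). apply Rinv_0_lt_compat; lra. lra.
    - assert (c <= Lambda lam 1) by (unfold c; apply Rmin_l). lra. }
  assert (Htj : forall j, (1 <= j <= m)%nat -> tau eps j >= d * (sqrt eps * sqrt (Lambda lam j))).
  { intros j Hj. assert (T := HA eps He1 G HG j ltac:(lia)).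
    assert (d * Rmax (sqrt eps * sqrt (Lambda lam j)) (eps * Lambda lam j) >= d * (sqrt eps * sqrt (Lambda lam j))).
    { apply Rle_ge. apply Rmult_le_compat_l. lra. apply Rmax_l. }
    lra. }
  destruct Hell as [s [Hs Hsr]].
  set (w := fun k => (theta0 (S k) - eta (S k)) ^ 2 / a (S k)).
  assert (Hws : is_series w s) by (apply is_series_Reals; exact Hs).
  assert (Hw0 : forall k, 0 <= w k).
  { intros k. unfold w. apply Rle_mult_inv_pos. apply pow2_ge_0. apply Hapos; lia. }
  set (E := fun j => if (j <=? m)%nat then
     (Defs.sigma lam tau eps j / tau eps j * (eta j - theta0 j))^2 + (Defs.sigma lam tau eps j * lam j * sqrt eps / eps)^2
     else (eta j - theta0 j)^2 + 0^2).
  assert (Hcoord : forall j, (1 <= j)%nat ->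
     GaussExpIs (fun x => (thetaHat m lam eta tau eps theta0 j x - theta0 j) ^ 2) (E j)).
  { intros j Hj. unfold E. destruct (j <=? m)%nat eqn:Hjm.
    - apply coord_in. lra. apply Htau; auto. apply Hnz; auto. apply Nat.leb_le; auto.
    - apply coord_out. apply Nat.leb_gt; auto. }
  set (C := Ph * (/ d^2 + 1)).
  assert (HC : 0 <= C).
  { unfold C. apply Rmult_le_pos; auto. assert (0 < / d^2) by (apply Rinv_0_lt_compat, pow_lt; lra). lra. }
  assert (Hbd : forall k, 0 <= E (S k) <= ind lam eps m k + C * w k).
  { intros k.
    assert (Haj : 0 < a (S k)) by (apply Hapos; lia).
    assert (Haj1 : a (S k) <= 1) by (rewrite <- Ha1; apply a_mono; auto; lia).
    assert (HD : (eta (S k) - theta0 (S k))^2 = a (S k) * w k).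
    { unfold w. field_simplify. ring. lra. }
    assert (Hq : 0 < / d^2) by (apply Rinv_0_lt_compat, pow_lt; lra).
    assert (HCw : Ph * w k <= C * w k /\ Ph * / d^2 * w k <= C * w k).
    { unfold C. assert (0 <= Ph * w k) by (apply Rmult_le_pos; auto).
      assert (0 <= Ph * / d^2 * w k) by (apply Rmult_le_pos; [apply Rmult_le_pos; lra| apply Hw0]).
      split; nra. }
    assert (HDw : (eta (S k) - theta0 (S k))^2 <= w k).
    { rewrite HD. assert (0 <= w k) by auto. nra. }
    unfold E, ind. destruct (S k <=? m)%nat eqn:Hjm.
    - apply Nat.leb_le in Hjm.
      assert (Hv := var_bound (lam (S k)) (tau eps (S k)) eps ltac:(lra) ltac:(apply Htau; auto; lia) ltac:(apply Hnz; lia)).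
      assert (Hb := bias_bound (lam (S k)) (tau eps (S k)) eps d (eta (S k) - theta0 (S k)) ltac:(lra)
         ltac:(apply Htau; auto; lia) ltac:(apply Hnz; lia) Hd ltac:(apply Htj; lia)).
      unfold Defs.sigma. fold (Lambda lam (S k)) in *.
      assert (HLj : eps * Lambda lam (S k) <= Ph).
      { eapply Rle_trans. 2: exact HLM. apply Rmult_le_compat_l. lra. apply Lambda_le_max; auto; lia. }
      assert (HLj0 : 0 < Lambda lam (S k)) by (apply Lambda_pos; auto; lia).
      split. apply Rplus_le_le_0_compat; apply pow2_ge_0.
      assert (eps * Lambda lam (S k) * (eta (S k) - theta0 (S k)) ^ 2 / d ^ 2 <= Ph * / d^2 * w k).
      { unfold Rdiv. replace (Ph * / d^2 * w k) with ((Ph * w k) * / d^2) by ring.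
        apply Rmult_le_compat_r. lra.
        assert (0 <= eps * Lambda lam (S k)) by (apply Rmult_le_pos; lra). apply Rmult_le_compat; try lra; try apply pow2_ge_0. }
      lra.
    - apply Nat.leb_gt in Hjm.
      split. apply Rplus_le_le_0_compat; apply pow2_ge_0.
      assert (a (S k) <= a m) by (apply a_mono; auto; lia).
      assert (0 <= w k) by auto.
      assert ((eta (S k) - theta0 (S k))^2 <= Ph * w k).
      { rewrite HD. apply Rmult_le_compat_r; auto. lra. }
      simpl (0^2). lra. }
  set (b := fun k => ind lam eps m k + C * w k).
  assert (Hbs : is_series b (eps * sumLam lam m + C * s)).
  { exact (is_series_plus (V:=R_NormedModule) _ _ _ _ (ind_sum lam eps m Hm1)
          (is_series_scal_l (V:=R_CompleteNormedModule) C _ _ Hws)). }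
  assert (Hex : ex_series (fun k => E (S k))).
  { apply (ex_series_le (V:=R_CompleteNormedModule) _ b). intros n. unfold norm; simpl. unfold abs; simpl.
    rewrite Rabs_right by (apply Rle_ge, Hbd). apply Hbd. eexists; exact Hbs. }
  exists (Series (fun k => E (S k))). split.
  - exists E. split. exact Hcoord. apply is_series_Reals. apply Series_correct. exact Hex.
  - assert (T : Series (fun k => E (S k)) <= eps * sumLam lam m + C * s).
    { rewrite <- (is_series_unique _ _ Hbs). apply Series_le. exact Hbd. eexists; exact Hbs. }
    eapply Rle_trans. exact T. fold Ph. unfold C.
    assert (Hq : 0 < / d^2) by (apply Rinv_0_lt_compat, pow_lt; lra).
    replace (r / d^2) with (r * / d^2) by reflexivity.
    set (q := / d^2) in *.
    assert (HM1 : 1 <= Rmax 1 r) by apply Rmax_l.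
    assert (HMr : r <= Rmax 1 r) by apply Rmax_r.
    set (M := Rmax 1 r) in *.
    assert (Ph * (q + 1) * s <= Ph * (q + 1) * r).
    { apply Rmult_le_compat_l. apply Rmult_le_pos; lra. auto. }
    assert (0 <= (2 * M - 1 - r) + r * q * (M - 1)).
    { assert (0 <= r * q * (M - 1)) by (apply Rmult_le_pos; [apply Rmult_le_pos|]; lra). lra. }
    assert (Ph * ((2 * M - 1 - r) + r * q * (M - 1)) >= 0) by (apply Rle_ge, Rmult_le_pos; lra).
    nra.
Qed.
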